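(* Let $n\ge 1$, $U_n$ the family of bounded subsets of $\mathbb R^n$, $H\subset\mathbb R^n$ locally finite, and $\mu_H:U_n\to B_2$, $\mu_H(A)=\pi(|A\cap H|)$. Then for every $A\in U_n$ and every $x\in A$ there exist $\varepsilon>0$ and $a\in B_2$ such that for every $B\in U_n$ with $x\in B$ and $d(B)<\varepsilon$ one has $\mu_H(B)=a$.
   Context: $B_2=\{0,1\}$. $H$ is locally finite if $A\cap H$ is finite for every bounded $A$. $\pi(m)=1$ if $m$ is odd and $0$ if $m$ is even. For a bounded $B\subset\mathbb R^n$, its diameter is $d(B)=\sup_{x,y\in B}\|x-y\|$ with $\|\cdot\|$ the Euclidean norm. *)

(* Defs.v *)
From mathcomp Require Import all_boot all_order all_algebra.
From mathcomp Require Import finmap all_classical all_reals.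
Set Implicit Arguments. Unset Strict Implicit. Unset Printing Implicit Defensive.
Import Order.TTheory GRing.Theory Num.Theory.
Local Open Scope classical_set_scope.
Local Open Scope ring_scope.
Local Open Scope fset_scope.

Definition enorm (R : realType) (n : nat) (x : 'rV[R]_n) : R :=
  Num.sqrt (\sum_(i < n) x ord0 i ^+ 2).

Definition ebounded (R : realType) (n : nat) (A : set 'rV[R]_n) : Prop :=
  exists M : R, forall x, A x -> enorm x <= M.

Definition locally_finite (R : realType) (n : nat) (H : set 'rV[R]_n) : Prop :=
  forall A, ebounded A -> finite_set (A `&` H).

(* pi(m) = 1 iff m odd; B_2 = bool. *)
Definition parity (m : nat) : bool := odd m.

Definition muH (R : realType) (n : nat) (H A : set 'rV[R]_n) : bool :=
  parity #|` fset_set (A `&` H)|.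

Definition diam (R : realType) (n : nat) (B : set 'rV[R]_n) : R :=
  sup [set enorm (x - y) | x in B & y in B].

(* Main.v *)
Require Import Defs.
From mathcomp Require Import all_boot all_order all_algebra.
From mathcomp Require Import finmap all_classical all_reals.
From mathcomp Require Import lra.
Import Order.TTheory GRing.Theory Num.Theory.
Local Open Scope classical_set_scope.
Local Open Scope ring_scope.

Set Implicit Arguments.
Section Aux.
Variables (R : realType) (n : nat).
Implicit Types (a b z : 'rV[R]_n).

Lemma sumsq_ge0 z : 0 <= \sum_(i < n) z ord0 i ^+ 2.
Proof. by apply: sumr_ge0 => i _; rewrite sqr_ge0. Qed.

Lemma enorm_ge0 z : 0 <= enorm z.
Proof. exact: sqrtr_ge0. Qed.

Lemma enorm_sq z : enorm z ^+ 2 = \sum_(i < n) z ord0 i ^+ 2.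
Proof. by rewrite /enorm sqr_sqrtr // sumsq_ge0. Qed.

Lemma enormD_le a b : enorm (a + b) <= 2 * (enorm a + enorm b).
Proof.
have h1 : enorm (a + b) ^+ 2 <= 2 * enorm a ^+ 2 + 2 * enorm b ^+ 2.
  rewrite !enorm_sq !mulr_sumr -big_split /=.
  apply: ler_sum => i _; rewrite !mxE.
  set u := a ord0 i; set v := b ord0 i.
  have := sqr_ge0 (u - v); rewrite sqrrB; nra.
have := enorm_ge0 a; have := enorm_ge0 b; have := enorm_ge0 (a + b).
nra.
Qed.

Lemma enormN z : enorm (- z) = enorm z.
Proof. by rewrite /enorm; congr Num.sqrt; apply: eq_bigr => i _; rewrite mxE sqrrN. Qed.

Lemma enorm_eq0 z : enorm z = 0 -> z = 0.
Proof.
move=> /eqP; rewrite sqrtr_eq0 => hle.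
have h0 : \sum_(i < n) z ord0 i ^+ 2 = 0.
  by apply/le_anti; rewrite hle sumsq_ge0.
apply/rowP => i; rewrite mxE.
have hi : z ord0 i ^+ 2 = 0 := psumr_eq0P (fun j _ => sqr_ge0 (z ord0 j)) h0 isT.
by apply/eqP; rewrite -sqrf_eq0 hi.
Qed.

Lemma seq_eps (x : 'rV[R]_n) (s : seq 'rV[R]_n) :
  exists eps : R, [/\ 0 < eps, eps <= 1 &
    forall h, h \in s -> h != x -> eps <= enorm (h - x)].
Proof.
elim: s => [|h s [e [e0 e1 he]]].
  by exists 1; split => //.
case: (eqVneq h x) => [->|hx].
  exists e; split => // k; rewrite inE => /orP [/eqP ->|ks]; first by rewrite eqxx.
  exact: he.
have hp : 0 < enorm (h - x).
  rewrite lt_neqAle enorm_ge0 andbT eq_sym; apply/eqP => /enorm_eq0 /eqP.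
  by rewrite subr_eq0 (negbTE hx).
exists (Num.min e (enorm (h - x))); split.
- by rewrite lt_min e0 hp.
- by rewrite ge_min e1.
- move=> k; rewrite inE => /orP [/eqP ->|ks] kx; first by rewrite ge_min lexx orbT.
  by rewrite ge_min he.
Qed.

End Aux.
Unset Implicit Arguments.
Arguments enormD_le {R n}.
Arguments enormN {R n}.
Arguments seq_eps {R n}.


Theorem proposition5p7 (R : realType) (n : nat) (hn : (1 <= n)%N)
    (H : set 'rV[R]_n) (hH : locally_finite H) :
  forall A : set 'rV[R]_n, ebounded A ->
  forall x : 'rV[R]_n, A x ->
  exists eps : R, 0 < eps /\
  exists a : bool, forall B : set 'rV[R]_n,
    ebounded B -> B x -> diam B < eps -> muH H B = a.
Proof.
move=> A _ x _.
pose Ball := [set y : 'rV[R]_n | enorm (y - x) < 1].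
have bB : ebounded Ball.
  exists (2 * (1 + enorm x)) => y; rewrite /Ball /= => hy.
  have := enormD_le (y - x) x; rewrite subrK => h.
  apply: (le_trans h); rewrite ler_pM2l //; lra.
have fF := hH _ bB.
have [eps [e0 e1 he]] := seq_eps x (fset_set (Ball `&` H)).
exists eps; split => //.
exists (muH H [set x]) => B [M hM] Bx hd.
rewrite /muH; suff -> : B `&` H = [set x] `&` H by [].
apply/seteqP; split => y [By Hy]; last by move: By Hy => /= ->.
have hub : has_ubound [set enorm (u - v) | u in B & v in B].
  exists (2 * (M + M)) => _ [u Bu [v Bv <-]].
  apply: (le_trans (enormD_le u (- v))); rewrite enormN ler_pM2l //.
  by apply: lerD; apply: hM.
have hy : enorm (y - x) <= diam B.
  by apply: (ub_le_sup hub); exists y => //; exists x.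
split => //=.
apply/eqP; apply: contraT => yx.
have yin : y \in fset_set (Ball `&` H).
  rewrite in_fset_set //; apply/mem_set; split => //; rewrite /Ball /=; lra.
have := he _ yin yx; lra.
Qed.
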